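(* Let $w\ge1$ and suppose $\alpha_2^2\le\frac{\ln w}{4}$ and $\alpha_1\sqrt w\ge \ln w$. If at a time $t\in[0,T)$ with $a_t^2\le\frac12$ the solution of the guided probability flow ODE satisfies $$x(t)\le \min\Bigl(\frac{\ln w}{16\alpha_2},\ \frac{\alpha_1\sqrt w}{2\beta}\Bigr),$$ then $$x'(t)\ge\frac{a_t\alpha_1\sqrt w}{2\beta b_t^2}.$$
   Context: Let $0<\alpha_1<\alpha_2$ and $\beta\ge1$. Let $p^{(1)}$ and $p^{(-1)}$ be probability densities on $\mathbb R$ supported on $[\alpha_1,\alpha_2]$ and $[-\alpha_2,-\alpha_1]$ respectively, which are $\beta$-bounded with respect to each other: $\frac1\beta\le \frac{p^{(-1)}(x_1)}{p^{(1)}(x_2)}\le\beta$ for all $x_1\in(-\alpha_2,-\alpha_1)$, $x_2\in(\alpha_1,\alpha_2)$. Let $p=\frac12p^{(1)}+\frac12p^{(-1)}$, and let $(X_0,z)$ be jointly distributed with $z$ uniform on $\{\pm1\}$ and $X_0\mid z\sim p^{(z)}$. Fix $T>0$; for $t\in[0,T]$ put $a_t=e^{t-T}$, $b_t=\sqrt{1-a_t^2}$, and $X_t=a_tX_0+\xi_t$ with $\xi_t\sim\mathcal N(0,b_t^2)$ independent of $(X_0,z)$. Let $p_t$ denote the density of $X_t$ and $p_t(\cdot\mid z=\pm1)$ the conditional density of $X_t$ given $z=\pm1$. For a guidance parameter $w\ge0$, the guided probability flow ODE is $x'(t)=x(t)+(w+1)\nabla\log p_t(x(t)\mid z=1)-w\nabla\log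 p_t(x(t))$, $t\in[0,T)$. *)

(* Defs.v *)
From HB Require Import structures.
From mathcomp Require Import all_boot all_order all_algebra.
From mathcomp Require Import all_classical all_reals all_analysis.
Set Implicit Arguments. Unset Strict Implicit. Unset Printing Implicit Defensive.
Import Order.TTheory GRing.Theory Num.Theory.
Import numFieldNormedType.Exports.
Local Open Scope classical_set_scope.
Local Open Scope ring_scope.

Section Defs.
Variable R : realType.

Definition is_density (p : R -> R) : Prop :=
  measurable_fun setT p /\ (forall x, 0 <= p x) /\
  (\int[lebesgue_measure]_(x in setT) (p x)%:E = 1)%E.

Definition supported_on (p : R -> R) (lo hi : R) : Prop :=
  forall x, (x < lo \/ hi < x) -> p x = 0.

Definition beta_bounded (beta a1 a2 : R) (pm pp : R -> R) : Prop :=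
  forall x1 x2, - a2 < x1 < - a1 -> a1 < x2 < a2 ->
    beta^-1 <= pm x1 / pp x2 <= beta.

Definition a_t (T t : R) : R := expR (t - T).
Definition b_t (T t : R) : R := Num.sqrt (1 - a_t T t ^+ 2).

Definition gauss_pdf (s u : R) : R :=
  expR (- (u ^+ 2) / (2 * s ^+ 2)) / (Num.sqrt (2 * pi) * s).

(* density at x of a X_0 + xi, X_0 ~ p, xi ~ N(0,b^2) independent *)
Definition noised_density (p : R -> R) (a b x : R) : R :=
  \int[lebesgue_measure]_(y in setT) (p y * gauss_pdf b (x - a * y)).

Definition pt_cond1 (p1 : R -> R) (T t x : R) : R :=
  noised_density p1 (a_t T t) (b_t T t) x.
Definition pt_condm1 (pm1 : R -> R) (T t x : R) : R :=
  noised_density pm1 (a_t T t) (b_t T t) x.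
Definition pt (p1 pm1 : R -> R) (T t x : R) : R :=
  2^-1 * pt_cond1 p1 T t x + 2^-1 * pt_condm1 pm1 T t x.

Definition score (f : R -> R) (x : R) : R := derive1 (fun y => ln (f y)) x.

Definition guided_field (w : R) (p1 pm1 : R -> R) (T t x : R) : R :=
  x + (w + 1) * score (pt_cond1 p1 T t) x - w * score (pt p1 pm1 T t) x.

Definition diffq (x : R -> R) (s h : R) : R := h^-1 * (x (s + h) - x s).

End Defs.

(* Main.v *)
Require Import Defs.
From HB Require Import structures.
From mathcomp Require Import all_boot all_order all_algebra.
From mathcomp Require Import all_classical all_reals all_analysis.
From mathcomp Require Import ring lra.
From mathcomp Require Import measurable_realfun.
Set Implicit Arguments. Unset Strict Implicit. Unset Printing Implicit Defensive.
Import Order.TTheory GRing.Theory Num.Theory.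
Import numFieldNormedType.Exports.
Local Open Scope classical_set_scope.
Local Open Scope ring_scope.
Section G.
Variable R : realType.
Variable b : R.
Hypothesis b0 : 0 < b.

Let c := (Num.sqrt (2 * pi) * b)^-1.
Lemma c_gt0 : 0 < c.
Proof. by rewrite invr_gt0 mulr_gt0 // sqrtr_gt0 mulr_gt0 // pi_gt0. Qed.

Lemma gaussE u : gauss_pdf b u = expR (- (u ^+ 2) / (2 * b ^+ 2)) * c.
Proof. by []. Qed.

Lemma is_derive_q (u : R) : is_derive u 1 (fun y : R => - (y ^+ 2) / (2 * b ^+ 2))
   (- (u / b ^+ 2)).
Proof.
have h : is_derive u 1 ((- (2 * b ^+ 2)^-1) \*: ((@id R) ^+ 2)) ((- (2 * b ^+ 2)^-1) *: ((2%:R * id u ^+ 1) *: 1)).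
  by apply: is_deriveZ; apply: is_deriveX; apply: is_derive_id.
have -> : (fun y : R => - (y ^+ 2) / (2 * b ^+ 2)) = ((- (2 * b ^+ 2)^-1) \*: ((@id R) ^+ 2)).
  by apply/funext => y /=; rewrite /GRing.scale /= mulrC mulNr mulrN.
apply: (is_derive_eq h).
rewrite /= expr1 /GRing.scale /=; field; rewrite gt_eqF //.
Qed.

Definition gd (u : R) := - (u / b ^+ 2) * gauss_pdf b u.

Lemma is_derive_gauss (u : R) : is_derive u 1 (gauss_pdf b) (gd u).
Proof.
have h1 : is_derive u 1 (expR \o (fun y : R => - (y ^+ 2) / (2 * b ^+ 2)))
   (expR (- (u ^+ 2) / (2 * b ^+ 2)) * - (u / b ^+ 2)).
  exact: (is_derive1_comp (is_derive_expR _) (is_derive_q u)).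
have h2 := is_deriveZ c h1.
have -> : gauss_pdf b = c \*: (expR \o (fun y : R => - (y ^+ 2) / (2 * b ^+ 2))).
  by apply/funext => y; rewrite gaussE /GRing.scale /= mulrC.
apply: (is_derive_eq h2).
by rewrite /gd gaussE /GRing.scale /=; ring.
Qed.

Lemma gauss_gt0 u : 0 < gauss_pdf b u.
Proof. by rewrite gaussE mulr_gt0 ?expR_gt0 ?c_gt0. Qed.

Lemma gauss_le u : gauss_pdf b u <= c.
Proof.
rewrite gaussE ler_piMl //; first exact: ltW c_gt0.
rewrite expR_le1 mulNr oppr_le0 mulr_ge0 ?sqr_ge0 // invr_ge0 mulr_ge0 // sqr_ge0 //.
Qed.

Lemma continuous_gauss : continuous (gauss_pdf b).
Proof.
move=> u; apply: differentiable_continuous; apply/derivable1_diffP.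
by have [] := is_derive_gauss u.
Qed.

Lemma continuous_gd : continuous gd.
Proof.
move=> u; rewrite /gd.
apply: cvgM; last exact: continuous_gauss.
apply: cvgN; apply: cvgMl; exact: cvg_id.
Qed.

Lemma gd_bound u : `|gd u| <= (1 + 2 * b ^+ 2) / b ^+ 2 * c.
Proof.
have b20 : 0 < b ^+ 2 by rewrite exprn_gt0.
set s := u ^+ 2 / (2 * b ^+ 2).
have s0 : 0 <= s by rewrite /s divr_ge0 ?sqr_ge0 // mulr_ge0 // ltW.
have hs : s * expR (- s) <= 1.
  rewrite expRN ler_pdivrMr ?expR_gt0 // mul1r.
  by apply: le_trans (expR_ge1Dx s); lra.
have hu : `|u| <= 1 + u ^+ 2.
  case: (lerP `|u| 1) => h; first by have := sqr_ge0 u; lra.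
  rewrite -(real_normK (num_real u)) expr2; nra.
have hus : u ^+ 2 = 2 * b ^+ 2 * s by rewrite /s; field; rewrite gt_eqF.
rewrite /gd gaussE normrM normrN normrM mulNr -/s normrM.
rewrite (ger0_norm (ltW (expR_gt0 _))) (ger0_norm (ltW c_gt0)).
rewrite (ger0_norm (x := b ^- 2)); last by rewrite invr_ge0 ltW.
have e0 := expR_gt0 (- s).
have := c_gt0 => c0.
have h : `|u| * expR (- s) <= 1 + 2 * b ^+ 2.
  apply: (le_trans (y := (1 + u ^+ 2) * expR (- s))); first by apply: ler_wpM2r => //; exact: ltW.
  rewrite hus mulrDl mul1r.
  have : expR (- s) <= 1 by rewrite expR_le1 oppr_le0.
  nra.
have -> : `|u| * b ^- 2 * (expR (- s) * c) = (`|u| * expR (- s)) * (b ^- 2 * c) by ring.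
have -> : (1 + 2 * b ^+ 2) / b ^+ 2 * c = (1 + 2 * b ^+ 2) * (b ^- 2 * c) by ring.
apply: ler_wpM2r => //; apply: mulr_ge0; [rewrite invr_ge0 ltW // | exact: ltW].
Qed.
End G.

Section I.
Variable R : realType.
Notation mu := (@lebesgue_measure R).
Variable p : R -> R.
Hypothesis hp : is_density p.

Lemma dens_ge0 y : 0 <= p y.
Proof. by case: hp => _ [] h _; exact: h. Qed.

Lemma dens_meas : measurable_fun setT p.
Proof. by case: hp. Qed.

Lemma dens_int : mu.-integrable setT (EFin \o p).
Proof.
case: hp => mp [p0 i1]; apply/integrableP; split.
  exact/measurable_EFinP.
under eq_integral do rewrite /= ger0_norm ?p0 //.
by rewrite i1 ltry.
Qed.

Lemma int_pb (h : R -> R) (K : R) : continuous h -> (forall y, `|h y| <= K) ->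
  mu.-integrable setT (EFin \o (fun y => p y * h y)).
Proof.
move=> ch hK.
have -> : (EFin \o (fun y => p y * h y)) = ((EFin \o p) \* (EFin \o h))%E.
  by apply/funext => y /=; rewrite EFinM.
apply: integrableMl => //; first exact: dens_int.
  exact: continuous_measurable_fun.
exists K; split; first exact: num_real.
move=> M hKM y _ /=; exact: le_trans (hK y) (ltW hKM).
Qed.

Lemma continuous_affine (g : R -> R) (z a : R) : continuous g ->
  continuous (fun y => g (z - a * y)).
Proof.
move=> cg y.
apply: (@continuous_comp _ _ _ (fun y => z - a * y) g).
  by apply: cvgB; [exact: cvg_cst | apply: cvgMr; exact: cvg_id].
exact: cg.
Qed.


Variables (a b : R).
Hypothesis b0 : 0 < b.

Let K := (1 + 2 * b ^+ 2) / b ^+ 2 * (Num.sqrt (2 * pi) * b)^-1.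

Lemma K_ge0 : 0 <= K.
Proof. by rewrite /K; apply: le_trans (gd_bound b0 0); exact: normr_ge0. Qed.

Let f := fun (z y : R) => p y * gauss_pdf b (z - a * y).

Lemma is_derive_f (z y : R) : is_derive z 1 (f ^~ y) (p y * gd b (z - a * y)).
Proof.
have h1 : is_derive z 1 (gauss_pdf b \o shift (- (a * y))) (gd b (z - a * y) * 1).
  apply: is_derive1_comp; last exact: is_derive_shift.
  exact: is_derive_gauss.
have h2 := is_deriveZ (p y) h1.
have -> : f ^~ y = p y \*: (gauss_pdf b \o shift (- (a * y))).
  by apply/funext => u; rewrite /f /GRing.scale /=.
apply: (is_derive_eq h2).
by rewrite /GRing.scale /= mulr1.
Qed.

Lemma int_f z : mu.-integrable setT (EFin \o f z).
Proof.
apply: (int_pb (K := (Num.sqrt (2 * pi) * b)^-1)).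
  exact: continuous_affine (continuous_gauss b0).
move=> y; rewrite ger0_norm; [exact: gauss_le | exact: ltW (gauss_gt0 b0 _)].
Qed.

Lemma int_fd z : mu.-integrable setT (EFin \o (fun y => p y * gd b (z - a * y))).
Proof.
apply: (int_pb (K := K)).
  exact: continuous_affine (continuous_gd b0).
move=> y; exact: gd_bound.
Qed.

Lemma F_is_derive (z0 : R) :
  is_derive z0 1 (fun z => noised_density p a b z)
    (\int[mu]_(y in setT) (p y * gd b (z0 - a * y))).
Proof.
have Ia : `](z0 - 1), (z0 + 1)[%classic z0.
  by rewrite /= in_itv /=; apply/andP; split; lra.
have intf : forall x, `](z0 - 1), (z0 + 1)[%classic x -> mu.-integrable setT (EFin \o f x).
  by move=> x _; exact: int_f.
have derf1 : forall x y, `](z0 - 1), (z0 + 1)[%classic x -> setT y -> derivable (f ^~ y) x 1.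
  by move=> x y _ _; have [] := is_derive_f x y.
have G_ge0 : forall y, 0 <= p y * K by move=> y; rewrite mulr_ge0 ?dens_ge0 ?K_ge0.
have intG : mu.-integrable setT (EFin \o (fun y => p y * K)).
  apply: (int_pb (K := K)); first exact: cst_continuous.
  by move=> _; rewrite ger0_norm ?K_ge0.
have d1E : forall x y, partial1of2 f x y = p y * gd b (x - a * y).
  by move=> x y; rewrite partial1of2E; have [_ ->] := is_derive_f x y.
have G_ub : forall x y, `](z0 - 1), (z0 + 1)[%classic x -> setT y ->
    `|partial1of2 f x y| <= p y * K.
  move=> x y _ _; rewrite d1E normrM ger0_norm ?dens_ge0 //.
  apply: ler_wpM2l; [exact: dens_ge0 | exact: gd_bound].
have D := differentiation_under_integral measurableT Ia intf derf1 G_ge0 intG G_ub.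
have Dv := derivable_under_integral measurableT Ia intf derf1 G_ge0 intG G_ub.
apply: DeriveDef; first exact: Dv.
rewrite -derive1E D.
by apply: eq_Rintegral => y _; rewrite d1E.
Qed.

End I.

Lemma gauss_mono (R : realType) (b u v : R) : 0 < b -> u ^+ 2 <= v ^+ 2 ->
  gauss_pdf b v <= gauss_pdf b u.
Proof.
move=> b0 huv; rewrite !gaussE ler_pM2r ?c_gt0 // ler_expR.
rewrite !mulNr lerN2 ler_pM2r // invr_gt0 mulr_gt0 // exprn_gt0 //.
Qed.

Lemma sq_diff_bound (R : realType) (a b x0 al2 w y y' : R) :
  0 < a -> a <= 1 -> a ^+ 2 <= 2^-1 -> 2^-1 <= b ^+ 2 -> 1 <= w -> 0 < al2 ->
  al2 ^+ 2 <= ln w / 4 -> x0 <= ln w / (16 * al2) ->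
  y' <= y -> y <= al2 -> - al2 <= y' ->
  (x0 - a * y') ^+ 2 - (x0 - a * y) ^+ 2 <= b ^+ 2 * ln w.
Proof.
move=> a0 a1 a2 hb w1 al0 hal hx yy yal yal'.
have lw : 0 <= ln w by apply: ln_ge0.
have -> : (x0 - a * y') ^+ 2 - (x0 - a * y) ^+ 2 =
  2 * a * x0 * (y - y') + a ^+ 2 * (y' ^+ 2 - y ^+ 2) by ring.
have hd : 0 <= y - y' by lra.
have hd2 : y - y' <= 2 * al2 by lra.
have T1 : 2 * a * x0 * (y - y') <= ln w / 4.
  case: (lerP x0 0) => hx0.
    have : 0 <= a * (y - y') by apply: mulr_ge0 => //; exact: ltW.
    nra.
  have h16 : x0 * (16 * al2) <= ln w by rewrite -ler_pdivlMr ?mulr_gt0.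
  have : a * (y - y') <= 2 * al2 by nra.
  nra.
have T2 : a ^+ 2 * (y' ^+ 2 - y ^+ 2) <= ln w / 8.
  have hy' : y' ^+ 2 <= al2 ^+ 2.
    case: (lerP 0 y') => h; nra.
  have : 0 <= a ^+ 2 by apply: sqr_ge0.
  have : 0 <= y ^+ 2 by apply: sqr_ge0.
  nra.
nra.
Qed.

Lemma gauss_ratio (R : realType) (a b x0 al2 w y y' : R) :
  0 < b -> 0 < a -> a <= 1 -> a ^+ 2 <= 2^-1 -> 2^-1 <= b ^+ 2 -> 1 <= w -> 0 < al2 ->
  al2 ^+ 2 <= ln w / 4 -> x0 <= ln w / (16 * al2) ->
  y' <= y -> y <= al2 -> - al2 <= y' ->
  gauss_pdf b (x0 - a * y) <= Num.sqrt w * gauss_pdf b (x0 - a * y').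
Proof.
move=> b0 a0 a1 a2 hb w1 al0 hal hx yy yal yal'.
have hd := sq_diff_bound (b:=b) a0 a1 a2 hb w1 al0 hal hx yy yal yal'.
have w0 : 0 < w by lra.
have hS : Num.sqrt w = expR (ln w / 2).
  have e : expR (ln w / 2) ^+ 2 = w.
    by rewrite expr2 -expRD (_ : ln w / 2 + ln w / 2 = ln w) ?lnK ?posrE //; field.
  by rewrite -{1}e sqrtr_sqr ger0_norm // ltW // expR_gt0.
rewrite hS !gaussE [X in _ <= X]mulrA -expRD ler_pM2r ?c_gt0 // ler_expR.
have b20 : 0 < 2 * b ^+ 2 by rewrite mulr_gt0 // exprn_gt0.
rewrite -subr_ge0.
have -> : ln w / 2 + - (x0 - a * y') ^+ 2 / (2 * b ^+ 2) - - (x0 - a * y) ^+ 2 / (2 * b ^+ 2)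
  = (b ^+ 2 * ln w - ((x0 - a * y') ^+ 2 - (x0 - a * y) ^+ 2)) / (2 * b ^+ 2).
  by field; rewrite gt_eqF // exprn_gt0.
by rewrite divr_ge0 ?subr_ge0 // ltW.
Qed.

Section L.
Variable R : realType.
Notation mu := (@lebesgue_measure R).
Variable p : R -> R.
Hypothesis hp : is_density p.

Lemma Rint_one : \int[mu]_(y in setT) p y = 1.
Proof. by case: hp => _ [] _ h; rewrite /Rintegral h. Qed.

Lemma continuousZ (h : R -> R) c : continuous h -> continuous (fun y => c * h y).
Proof. by move=> ch y; apply: cvgMr; exact: ch. Qed.

Lemma Rint_pc (h : R -> R) (K : R) c : continuous h -> (forall y, `|h y| <= K) ->
  \int[mu]_(y in setT) (p y * (c * h y)) = c * \int[mu]_(y in setT) (p y * h y).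
Proof.
move=> ch hK; rewrite -RintegralZl //.
2: exact: (int_pb hp ch hK).
by apply: eq_Rintegral => y _; ring.
Qed.

Lemma Rint_cst c : \int[mu]_(y in setT) (p y * c) = c.
Proof.
rewrite (_ : \int[mu]_(y in setT) (p y * c) = \int[mu]_(y in setT) (p y * (c * 1))).
  rewrite (Rint_pc (K := 1)) ?Rint_one1 //.
  - have -> : \int[mu]_(y in setT) (p y * 1) = \int[mu]_(y in setT) p y.
      by apply: eq_Rintegral => y _; rewrite mulr1.
    by rewrite Rint_one mulr1.
  - exact: cst_continuous.
  - by move=> _; rewrite normr1.
by apply: eq_Rintegral => y _; rewrite mulr1.
Qed.

Lemma Rint_lin (h1 h2 : R -> R) (K1 K2 c1 c2 : R) :
  continuous h1 -> (forall y, `|h1 y| <= K1) ->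
  continuous h2 -> (forall y, `|h2 y| <= K2) ->
  \int[mu]_(y in setT) (p y * (c1 * h1 y + c2 * h2 y)) =
  c1 * \int[mu]_(y in setT) (p y * h1 y) + c2 * \int[mu]_(y in setT) (p y * h2 y).
Proof.
move=> ch1 b1 ch2 b2.
have bb1 : forall y, `|c1 * h1 y| <= `|c1| * K1.
  by move=> y; rewrite normrM ler_wpM2l.
have bb2 : forall y, `|c2 * h2 y| <= `|c2| * K2.
  by move=> y; rewrite normrM ler_wpM2l.
rewrite (_ : \int[mu]_(y in setT) (p y * (c1 * h1 y + c2 * h2 y)) =
  \int[mu]_(y in setT) (p y * (c1 * h1 y) + p y * (c2 * h2 y))); last first.
  by apply: eq_Rintegral => y _; ring.
rewrite RintegralD //.
- by rewrite (Rint_pc c1 ch1 b1) (Rint_pc c2 ch2 b2).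
- exact: (int_pb hp (continuousZ (c := c1) ch1) bb1).
- exact: (int_pb hp (continuousZ (c := c2) ch2) bb2).
Qed.

Lemma Rint_le (h1 h2 : R -> R) (K1 K2 lo hi : R) : supported_on p lo hi ->
  continuous h1 -> (forall y, `|h1 y| <= K1) ->
  continuous h2 -> (forall y, `|h2 y| <= K2) ->
  (forall y, lo <= y <= hi -> h1 y <= h2 y) ->
  \int[mu]_(y in setT) (p y * h1 y) <= \int[mu]_(y in setT) (p y * h2 y).
Proof.
move=> sp ch1 b1 ch2 b2 h12.
apply: le_Rintegral => //.
- have HH := int_pb hp ch1 b1. exact: HH.
- exact (int_pb hp ch2 b2).
move=> y _.
case: (lerP lo y) => hlo; case: (lerP y hi) => hhi.
- by apply: ler_wpM2l; [exact (dens_ge0 hp y) | apply: h12; rewrite hlo hhi].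
- by rewrite sp ?mul0r //; right.
- by rewrite sp ?mul0r //; left.
- by rewrite sp ?mul0r //; left.
Qed.

End L.
Lemma alg_main (R : realFieldType) (a b x0 al S w be P M E1 Em : R) :
  0 < a -> a <= 1 -> 0 < b -> b ^+ 2 = 1 - a ^+ 2 -> 0 < P -> 0 < M ->
  1 <= S -> S ^+ 2 = w -> 1 <= be -> 0 < al ->
  a * al * P <= E1 -> Em <= - (a * al * M) -> P <= S * M ->
  (0 < x0 -> x0 <= al * S / (2 * be)) ->
  a * al * S / (2 * be * b ^+ 2) <=
  x0 + (w + 1) * ((E1 - x0 * P) / b ^+ 2 / P) -
  w * ((2^-1 * ((E1 - x0 * P) / b ^+ 2) + 2^-1 * ((Em - x0 * M) / b ^+ 2)) /
       (2^-1 * P + 2^-1 * M)).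
Proof.
move=> a0 a1 b0 hb P0 M0 S1 hS be1 al0 hE1 hEm hPM hx.
have b20 : 0 < b ^+ 2 by rewrite exprn_gt0.
have PM0 : 0 < P + M by lra.
have -> : x0 + (w + 1) * ((E1 - x0 * P) / b ^+ 2 / P) -
  w * ((2^-1 * ((E1 - x0 * P) / b ^+ 2) + 2^-1 * ((Em - x0 * M) / b ^+ 2)) /
       (2^-1 * P + 2^-1 * M)) =
  ((b ^+ 2 - 1) * x0 + E1 / P + w * ((E1 * M - Em * P) / (P * (P + M)))) / b ^+ 2.
  rewrite -hS; field.
  by rewrite !gt_eqF //; lra.
rewrite (_ : b ^+ 2 - 1 = - a ^+ 2); last by rewrite hb; ring.
have be0 : 0 < be by lra.
have -> : a * al * S / (2 * be * b ^+ 2) = (a * al * S / (2 * be)) / b ^+ 2.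
  by field; rewrite !gt_eqF.
rewrite ler_pM2r ?invr_gt0 //.
have h1 : a * al <= E1 / P by rewrite ler_pdivlMr //.
have h2 : 2 * a * al * M / (P + M) <= (E1 * M - Em * P) / (P * (P + M)).
  rewrite ler_pdivlMr ?mulr_gt0 //.
  have -> : 2 * a * al * M / (P + M) * (P * (P + M)) = 2 * (a * al * P) * M.
    by field; rewrite gt_eqF.
  nra.
have h3 : S * (S + 1) <= 2 * w by rewrite -hS; nra.
have h4 : a * al * S <= w * (2 * a * al * M / (P + M)).
  have h4' : S * (P + M) <= 2 * w * M.
    have : S * P <= S * (S * M) by nra.
    nra.
  have -> : w * (2 * a * al * M / (P + M)) = (a * al) * (2 * w * M) / (P + M).
    by field; rewrite gt_eqF.
  have ha : 0 <= a * al by apply: mulr_ge0; lra.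
  rewrite ler_pdivlMr //; have := ler_wpM2l ha h4'; lra.
have h5 : a * al * S / (2 * be) * 2 <= a * al * S.
  rewrite (_ : a * al * S / (2 * be) * 2 = a * al * S / be); last by field; rewrite gt_eqF.
  rewrite ler_pdivrMr //.
  have : 0 < a * al * S by apply: mulr_gt0 => //; [apply: mulr_gt0 | lra].
  nra.
have hw : 0 <= w by rewrite -hS sqr_ge0.
have h6 : w * (2 * a * al * M / (P + M)) <= w * ((E1 * M - Em * P) / (P * (P + M))).
  by apply: ler_wpM2l.
case: (ltrP 0 x0) => hx0.
- have := hx hx0 => hx'.
  have : a ^+ 2 * x0 <= a * al * S / (2 * be).
    apply: (le_trans (y := x0 * a)); first by rewrite mulrC expr2 mulrA ler_pM2r //; nra.
    rewrite mulrC -!mulrA ler_pM2l // mulrA; exact: hx'.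
  have : 0 <= a * al by apply: mulr_ge0; lra.
    lra.
- have : 0 <= - a ^+ 2 * x0 by rewrite mulNr -mulrN mulr_ge0 ?sqr_ge0 // oppr_ge0.
  have : 0 <= a * al by apply: mulr_ge0; lra.
  have : 0 <= a * al * S by apply: mulr_ge0; [apply: mulr_ge0|]; lra.
  lra.
Qed.

Lemma alg_main2 (R : realFieldType) (a b x0 al S w be P M D1 Dm : R) :
  0 < a -> a <= 1 -> 0 < b -> b ^+ 2 = 1 - a ^+ 2 -> 0 < P -> 0 < M ->
  1 <= S -> S ^+ 2 = w -> 1 <= be -> 0 < al ->
  a * al * P <= b ^+ 2 * D1 + x0 * P -> b ^+ 2 * Dm + x0 * M <= - (a * al * M) ->
  P <= S * M ->
  (0 < x0 -> x0 <= al * S / (2 * be)) ->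
  a * al * S / (2 * be * b ^+ 2) <=
  x0 + (w + 1) * (P^-1 * D1) -
  w * ((2^-1 * P + 2^-1 * M)^-1 * (2^-1 * D1 + 2^-1 * Dm)).
Proof.
move=> a0 a1 b0 hb P0 M0 S1 hS be1 al0 h1 h2 h3 h4.
have := alg_main a0 a1 b0 hb P0 M0 S1 hS be1 al0 h1 h2 h3 h4.
have b2 : b ^+ 2 != 0 by rewrite gt_eqF // exprn_gt0.
have -> : (b ^+ 2 * D1 + x0 * P - x0 * P) / b ^+ 2 = D1 by field; rewrite gt_eqF.
have -> : (b ^+ 2 * Dm + x0 * M - x0 * M) / b ^+ 2 = Dm by field; rewrite gt_eqF.
by rewrite (mulrC (P^-1)) (mulrC ((2^-1 * P + 2^-1 * M)^-1)).
Qed.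

Unset Implicit Arguments.
Set Strict Implicit.

Theorem lemma3p2 (R : realType) (alpha1 alpha2 beta T w : R)
  (p1 pm1 : R -> R) (x : R -> R) (t : R) :
  0 < alpha1 -> alpha1 < alpha2 -> 1 <= beta -> 0 < T ->
  is_density p1 -> is_density pm1 ->
  supported_on p1 alpha1 alpha2 -> supported_on pm1 (- alpha2) (- alpha1) ->
  beta_bounded beta alpha1 alpha2 pm1 p1 ->
  1 <= w ->
  alpha2 ^+ 2 <= ln w / 4 ->
  ln w <= alpha1 * Num.sqrt w ->
  (* x solves the guided probability flow ODE on [0, T) *)
  (forall s, 0 <= s < T ->
     diffq x s h @[h --> 0^'+] --> guided_field w p1 pm1 T s (x s)) ->
  0 <= t < T ->
  a_t T t ^+ 2 <= 2^-1 ->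
  x t <= Num.min (ln w / (16 * alpha2)) (alpha1 * Num.sqrt w / (2 * beta)) ->
  a_t T t * alpha1 * Num.sqrt w / (2 * beta * b_t T t ^+ 2)
    <= lim (diffq x t h @[h --> 0^'+]).
Proof.
move=> al10 al12 be1 T0 hp1 hpm sp1 spm _ w1 hal2 _ hode ht ha2 hx.
rewrite (cvg_lim _ (hode t ht)) //.
rewrite /guided_field /score.
have a0 : 0 < a_t T t by apply: expR_gt0.
have a1 : a_t T t <= 1.
  by rewrite /a_t expR_le1; case/andP: ht => _ ?; lra.
have hb2 : b_t T t ^+ 2 = 1 - a_t T t ^+ 2.
  by rewrite /b_t sqr_sqrtr //; lra.
have b0 : 0 < b_t T t by rewrite /b_t sqrtr_gt0; lra.
move: hx; rewrite le_min => /andP [hx1 hx2].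
have hb : 2^-1 <= b_t T t ^+ 2 by rewrite hb2; lra.
have al20 : 0 < alpha2 by lra.
have w0 : 0 < w by lra.
set a := a_t T t in a0 a1 hb2 ha2 *.
set b := b_t T t in b0 hb2 hb *.
set x0 := x t in hx1 hx2 *.
set S := Num.sqrt w.
have hS : S ^+ 2 = w by rewrite sqr_sqrtr // ltW.
have S1 : 1 <= S by rewrite -sqrtr1 ler_sqrt //; lra.
pose c := (Num.sqrt (2 * pi) * b)^-1.
pose K := (1 + 2 * b ^+ 2) / b ^+ 2 * c.
have gb : forall u, `|gauss_pdf b u| <= c.
  by move=> u; rewrite ger0_norm ?gauss_le // ltW // gauss_gt0.
have gdb : forall u, `|gd b u| <= K by move=> u; exact: gd_bound.
have cg := continuous_gauss b0.
have cgd := continuous_gd b0.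
have cga : forall z, continuous (fun y => gauss_pdf b (z - a * y)).
  by move=> z; exact: continuous_affine.
have cgda : forall z, continuous (fun y => gd b (z - a * y)).
  by move=> z; exact: continuous_affine.
have gba : forall z y, `|gauss_pdf b (z - a * y)| <= c by move=> z y; exact: gb.
have gdba : forall z y, `|gd b (z - a * y)| <= K by move=> z y; exact: gdb.
have ccst : forall k : R, continuous (fun _ : R => k) by move=> k; exact: cst_continuous.
have bcst : forall k y : R, `|k| <= `|k| by [].
set P := noised_density p1 a b x0.
set M := noised_density pm1 a b x0.
set D1 := \int[lebesgue_measure]_(y in setT) (p1 y * gd b (x0 - a * y)).
set Dm := \int[lebesgue_measure]_(y in setT) (pm1 y * gd b (x0 - a * y)).
have P0 : 0 < P.
  apply: (lt_le_trans (y := gauss_pdf b (`|x0| + alpha2))); first exact: gauss_gt0.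
  rewrite -{1}(Rint_cst hp1 (gauss_pdf b (`|x0| + alpha2))) /P /noised_density.
  apply: (Rint_le hp1 sp1 (ccst (gauss_pdf b (`|x0| + alpha2))) (bcst _) (cga x0) (gba x0)).
  move=> y /andP [y1 y2]; apply: gauss_mono => //.
  have hn1 := ler_norm x0.
  have hn2 : - x0 <= `|x0| by rewrite -normrN ler_norm.
  have : 0 <= a * y by apply: mulr_ge0; lra.
  have : a * y <= alpha2 by nra.
  nra.
have hPy : forall y', - alpha2 <= y' <= - alpha1 -> P <= S * gauss_pdf b (x0 - a * y').
  move=> y' /andP [y1 y2].
  rewrite -(Rint_cst hp1 (S * gauss_pdf b (x0 - a * y'))) /P /noised_density.
  apply: (Rint_le hp1 sp1 (cga x0) (gba x0) (ccst _) (bcst _)).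
  move=> y /andP [y3 y4].
  apply: (gauss_ratio (al2 := alpha2)) => //; lra.
have hPM : P <= S * M.
  rewrite /M /noised_density -(Rint_pc hpm S (cga x0) (gba x0)).
  rewrite -{1}(Rint_cst hpm P).
  apply: (Rint_le hpm spm (ccst P) (bcst _) _ _).
  - exact: continuousZ.
  - by move=> y; rewrite normrM; apply: ler_wpM2l => //; exact: gba.
  - by move=> y /hPy.
have M0 : 0 < M.
  have : 0 < S * M by lra.
  by rewrite pmulr_rgt0 //; lra.
have hE1 : a * alpha1 * P <= b ^+ 2 * D1 + x0 * P.
  rewrite /D1 /P /noised_density -(Rint_pc hp1 _ (cga x0) (gba x0)).
  rewrite -(Rint_lin hp1 _ _ (cgda x0) (gdba x0) (cga x0) (gba x0)).
  apply: (Rint_le hp1 sp1 (K1 := `|a * alpha1| * c) (K2 := `|b ^+ 2| * K + `|x0| * c) _ _ _ _).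
  - exact: continuousZ.
  - by move=> y; rewrite normrM; apply: ler_wpM2l => //; exact: gba.
  - move=> y; apply: cvgD; [exact: (continuousZ (c := b ^+ 2) (cgda x0)) | exact: (continuousZ (c := x0) (cga x0))].
  - move=> y; apply: (le_trans (ler_normD _ _)).
    by apply: lerD; rewrite normrM; apply: ler_wpM2l => //.
  move=> y /andP [y1 y2].
  have g0 := gauss_gt0 b0 (x0 - a * y).
  have -> : b ^+ 2 * gd b (x0 - a * y) + x0 * gauss_pdf b (x0 - a * y) =
     a * y * gauss_pdf b (x0 - a * y).
    by rewrite /gd; field; rewrite gt_eqF.
  apply: ler_wpM2r; first exact: ltW.
  by apply: ler_wpM2l => //; exact: ltW.
have hEm : b ^+ 2 * Dm + x0 * M <= - (a * alpha1 * M).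
  rewrite -mulNr /Dm /M /noised_density -(Rint_pc hpm (- (a * alpha1)) (cga x0) (gba x0)).
  rewrite -(Rint_lin hpm _ _ (cgda x0) (gdba x0) (cga x0) (gba x0)).
  apply: (Rint_le hpm spm (K2 := `|- (a * alpha1)| * c) (K1 := `|b ^+ 2| * K + `|x0| * c) _ _ _ _).
  - move=> y; apply: cvgD; [exact: (continuousZ (c := b ^+ 2) (cgda x0)) | exact: (continuousZ (c := x0) (cga x0))].
  - move=> y; apply: (le_trans (ler_normD _ _)).
    by apply: lerD; rewrite normrM; apply: ler_wpM2l => //.
  - exact: continuousZ.
  - by move=> y; rewrite normrM; apply: ler_wpM2l => //; exact: gba.
  move=> y /andP [y1 y2].
  have g0 := gauss_gt0 b0 (x0 - a * y).
  have -> : b ^+ 2 * gd b (x0 - a * y) + x0 * gauss_pdf b (x0 - a * y) =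
     a * y * gauss_pdf b (x0 - a * y).
    by rewrite /gd; field; rewrite gt_eqF.
  apply: ler_wpM2r; first exact: ltW.
  rewrite -mulrN; apply: ler_wpM2l; [exact: ltW | lra].
have dF1 := F_is_derive hp1 a b0 x0.
have dFm := F_is_derive hpm a b0 x0.
have s1 : (fun y : R => ln (pt_cond1 p1 T t y))^`()%classic x0 = P^-1 * D1.
  have H := is_derive1_comp (is_derive1_ln P0) dF1.
  by rewrite derive1E; case: H => _ e; exact: e.
have Ph0 : 0 < 2^-1 * P + 2^-1 * M by lra.
have dpt : is_derive x0 1 (fun z => pt p1 pm1 T t z) (2^-1 * D1 + 2^-1 * Dm).
  have H := is_deriveD (is_deriveZ (2^-1 : R) dF1) (is_deriveZ (2^-1 : R) dFm).
  have -> : (fun z => pt p1 pm1 T t z) =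
     (2^-1 \*: (fun z => noised_density p1 a b z) + 2^-1 \*: (fun z => noised_density pm1 a b z)).
    by apply/funext => z.
  exact: H.
have s2 : (fun y : R => ln (pt p1 pm1 T t y))^`()%classic x0 =
    (2^-1 * P + 2^-1 * M)^-1 * (2^-1 * D1 + 2^-1 * Dm).
  have Hl : is_derive (pt p1 pm1 T t x0) 1 (@ln R) (2^-1 * P + 2^-1 * M)^-1 :=
    is_derive1_ln Ph0.
  have H := is_derive1_comp Hl dpt.
  by rewrite derive1E; case: H => _ e; exact: e.
rewrite s1 s2.
exact: alg_main2.
Qed.
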